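(* Let $k$ be a field of characteristic $0$, let $n_0<n_1$ be positive integers with $\gcd(n_0,n_1)=1$, and let $S=\langle (0,n_1),(n_0,n_1-n_0),(n_1,0)\rangle\subseteq\mathbb{N}^2$. Let $S_1=\langle n_0,n_1\rangle$ and $S_2=\langle n_1-n_0,n_1\rangle$ be the projections of $S$ onto the first and second coordinates. Then: \begin{enumerate} \item If $S_1\neq\mathbb{N}$ and $S_2\neq\mathbb{N}$, then $\mathrm{Der}_k(k[S])$ is minimally generated by $\left\{ t\frac{\partial}{\partial t},\ t^{n_0(n_1-1)-n_1+1}u^{(n_1-1)(n_1-n_0)}\frac{\partial}{\partial t},\ u\frac{\partial}{\partial u},\ t^{n_0(n_1-1)}u^{(n_1-1)(n_1-n_0)-n_1+1}\frac{\partial}{\partial u}\right\}$. \item If $S_1=\mathbb{N}$ and $S_2\neq\mathbb{N}$, then $\mathrm{Der}_k(k[S])$ is minimally generated by $\left\{ t\frac{\partial}{\partial t},\ u^{1+(n_1-2)n_1}\frac{\partial}{\partial t},\ u\frac{\partial}{\partial u},\ t^{n_1-1}u^{(n_1-1)(n_1-2)}\frac{\partial}{\partial u}\right\}$. \item If $S_1\neq\mathbb{N}$ and $S_2=\mathbb{N}$, then $\mathrm{Der}_k(k[S])$ is minimally generated by $\left\{ t\frac{\partial}{\partial t},\ t^{n_0(n_1-1)-n_1+1}u^{n_1-1}\frac{\partial}{\partial t},\ u\frac{\partial}{\partial u},\ t^{n_0(n_1-1)}\frac{\partial}{\partial u}\right\}$. \item If $S_1=S_2=\mathbb{N}$, then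 $\mathrm{Der}_k(k[S])$ is minimally generated by $\left\{ t\frac{\partial}{\partial t},\ u\frac{\partial}{\partial t},\ u\frac{\partial}{\partial u},\ t\frac{\partial}{\partial u}\right\}$. \end{enumerate}
   Context: For an affine semigroup $S\subseteq\mathbb{N}^2$, the semigroup ring is $k[S]=\bigoplus_{(s_1,s_2)\in S}k\,t^{s_1}u^{s_2}\subseteq k[t,u]$, where $t,u$ are indeterminates (the first coordinate is the exponent of $t$, the second that of $u$). $\mathrm{Der}_k(k[S])$ is the $k[S]$-module of $k$-derivations of $k[S]$; every such derivation extends uniquely to the fraction field $k(t,u)$ and is written as $f\frac{\partial}{\partial t}+g\frac{\partial}{\partial u}$. ''Minimally generated'' refers to a minimal generating set of $\mathrm{Der}_k(k[S])$ as a $k[S]$-module. $\langle a_0,\dots,a_m\rangle$ denotes the set of $\mathbb{N}$-linear combinations of $a_0,\dots,a_m$. *)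

(* Defs.v *)
From HB Require Import structures.
From mathcomp Require Import all_boot all_order all_algebra.
From mathcomp Require Import mpoly.
Set Implicit Arguments. Unset Strict Implicit. Unset Printing Implicit Defensive.
Import Order.TTheory GRing.Theory.
Local Open Scope ring_scope.

Definition tvar : 'I_2 := ord0.
Definition uvar : 'I_2 := ord_max.

Definition mono (k : fieldType) (a b : nat) : {mpoly k[2]} :=
  'X_tvar ^+ a * 'X_uvar ^+ b.

Definition numSg (a b x : nat) : Prop := exists i j : nat, x = (i * a + j * b)%N.

(* S = <(0,n1),(n0,n1-n0),(n1,0)> in N^2 (first coord = exponent of t) *)
Definition inS (n0 n1 x y : nat) : Prop :=
  exists a b c : nat, x = (b * n0 + c * n1)%N /\ y = (a * n1 + b * (n1 - n0))%N.

Definition inkS (k : fieldType) (n0 n1 : nat) (p : {mpoly k[2]}) : Prop :=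
  forall m, m \in msupp p -> inS n0 n1 (m tvar) (m uvar).

(* a k-derivation of k[S], represented by a map on k[t,u] whose restriction
   to k[S] is the derivation (values outside k[S] are irrelevant) *)
Definition isDerkS (k : fieldType) (n0 n1 : nat) (D : {mpoly k[2]} -> {mpoly k[2]}) : Prop :=
  [/\ forall p, inkS n0 n1 p -> inkS n0 n1 (D p),
      forall (c : k) p q, inkS n0 n1 p -> inkS n0 n1 q -> D (c *: p + q) = c *: D p + D q
    & forall p q, inkS n0 n1 p -> inkS n0 n1 q -> D (p * q) = p * D q + q * D p].

Definition vf (k : fieldType) (fg : {mpoly k[2]} * {mpoly k[2]}) (h : {mpoly k[2]}) : {mpoly k[2]} :=
  fg.1 * mderiv tvar h + fg.2 * mderiv uvar h.

Definition inSpan (k : fieldType) (n0 n1 : nat) (m : nat)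
    (G : 'I_m -> {mpoly k[2]} * {mpoly k[2]}) (P : pred 'I_m)
    (D : {mpoly k[2]} -> {mpoly k[2]}) : Prop :=
  exists c : 'I_m -> {mpoly k[2]}, (forall i, inkS n0 n1 (c i)) /\
    forall h, inkS n0 n1 h -> D h = \sum_(i < m | P i) c i * vf (G i) h.

Definition minGenDer (k : fieldType) (n0 n1 : nat) (m : nat)
    (G : 'I_m -> {mpoly k[2]} * {mpoly k[2]}) : Prop :=
  [/\ forall i, isDerkS n0 n1 (vf (G i)),
      forall D, isDerkS n0 n1 D -> inSpan n0 n1 G predT D
    & forall j, ~ inSpan n0 n1 G (fun i => i != j) (vf (G j))].

Definition fam4 (k : fieldType) (a b c d : {mpoly k[2]} * {mpoly k[2]}) :
  'I_4 -> {mpoly k[2]} * {mpoly k[2]} := fun i => nth a [:: a; b; c; d] i.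

(* Main.v *)
Require Import Defs.
From HB Require Import structures.
From mathcomp Require Import all_boot all_order all_algebra.
From mathcomp Require Import mpoly.
From mathcomp Require Import zify ring.

Section Nat.
Variables (n0 n1 : nat).
Hypotheses (hn0 : (0 < n0)%N) (hn01 : (n0 < n1)%N) (hcop : coprime n0 n1).

Lemma inS_norm p q : inS n0 n1 p q ->
  exists a b c, (b < n1)%N /\ p = (b * n0 + c * n1)%N /\ q = (a * n1 + b * (n1 - n0))%N.
Proof.
case=> a [b [c [-> ->]]].
exists (a + b %/ n1 * (n1 - n0))%N, (b %% n1), (c + b %/ n1 * n0)%N.
rewrite ltn_pmod; last by lia.
split=> //.
have hb := divn_eq b n1.
split.
- rewrite {1}hb. timeout 15 nia.
- rewrite {1}hb. timeout 15 nia.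
Qed.

Lemma uniq_lin x y x' y' : (x * n0 + y * n1 = x' * n0 + y' * n1)%N ->
  (x < n1)%N -> (x' < n1)%N -> x = x' /\ y = y'.
Proof.
move=> E hx hx'.
have key : forall u v u' v', (u * n0 + v * n1 = u' * n0 + v' * n1)%N -> (u < n1)%N -> (u' <= u)%N -> u = u'.
  move=> u v u' v' E' hu hle.
  have h1 : ((u - u') * n0 = (v' - v) * n1)%N.
    rewrite !mulnBl. lia.
  have : (n1 %| (u - u') * n0)%N by rewrite h1 dvdn_mull.
  rewrite Gauss_dvdl; last by rewrite coprime_sym.
  move=> hd. have : (u - u' < n1)%N by lia.
  move=> hl. have := dvdn_leq. case: (posnP (u - u')) => hz; first lia.
  move=> /(_ _ _ hz hd). lia.
have ex : x = x'.
  case: (leqP x' x) => h; first exact: (key _ _ _ _ E hx h).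
  apply/esym; apply: (key _ _ _ _ (esym E) hx'); lia.
split=> //. subst x'. have : (y * n1 = y' * n1)%N by lia.
move/eqP; rewrite eqn_pmul2r; [by move/eqP | lia].
Qed.


Let A := (n0 * (n1 - 1))%N.
Let B := ((n1 - 1) * (n1 - n0))%N.

Lemma nat_facts : [/\ (n0 * (n1 - 1) + n0 = n0 * n1)%N, (n1 * (n0 - 1) + n1 = n1 * n0)%N,
   ((n1 - n0) * (n1 - 1) + (n1 - n0) = n1 * (n1 - n0))%N,
   (n1 * (n1 - n0 - 1) + n1 = n1 * (n1 - n0))%N & (n1 - n0 + n0 = n1)%N].
Proof.
have [r ->] : exists r, n1 = (n0 + r.+1)%N by exists (n1 - n0 - 1)%N; lia.
have [s ->] : exists s, n0 = s.+1 by exists (n0 - 1)%N; lia.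
have e1 : (s.+1 + r.+1 - 1 = s + r.+1)%N by lia.
have e2 : (s.+1 - 1 = s)%N by lia.
have e3 : (s.+1 + r.+1 - s.+1 = r.+1)%N by lia.
have e4 : (r.+1 - 1 = r)%N by lia.
rewrite e1 e2 e3 e4; split; timeout 15 nia.
Qed.

Lemma CL_f p q : inS n0 n1 p q ->
  ((exists p1 q1, inS n0 n1 p1 q1 /\ (p1 + n0*(n1-1) = p + n1*(n0-1))%N /\ (q1 + (n1-n0)*(n1-1) = q + n1*(n1-n0))%N)
  \/ (exists p2 q2, inS n0 n1 p2 q2 /\ (p2 + n1*n0 = p + n1*(n0-1))%N /\ (q2 + n1*(n1-n0-1) = q + n1*(n1-n0))%N)) ->
  (exists p', inS n0 n1 p' q /\ p = (p' + n1)%N) \/ (exists p' q', inS n0 n1 p' q' /\ p = (p' + A)%N /\ q = (q' + B)%N).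
Proof.
case/inS_norm=> a [b [c [hb [-> ->]]]].
case: nat_facts => f1 f2 f3 f4 f5.
case.
- case=> p1 [q1 [/inS_norm [a' [b' [c' [hb' [ep1 eq1]]]]] [E1 E2]]].
  have E : ((b + 1) * n0 + c * n1 = b' * n0 + (c' + 1) * n1)%N.
    rewrite ep1 in E1. timeout 15 nia.
  case: (ltnP (b + 1) n1) => hb1.
  + case: (@uniq_lin _ _ _ _ E hb1 hb') => eb ec.
    left; exists (b * n0 + c' * n1)%N; split; last by timeout 15 nia.
    by exists a, b, c'.
  + have eb : b = (n1 - 1)%N by lia.
    right; exists (c * n1)%N, (a * n1)%N; split; first by exists a, 0%N, c; rewrite !mul0n add0n addn0.
    rewrite /A /B eb; timeout 15 nia.
- case=> p2 [q2 [/inS_norm [a' [b' [c' [hb' [ep2 eq2]]]]] [E1 E2]]].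
  have E : (b * n0 + c * n1 = b' * n0 + (c' + 1) * n1)%N.
    rewrite ep2 in E1. timeout 15 nia.
  case: (@uniq_lin _ _ _ _ E hb hb') => eb ec.
  left; exists (b * n0 + c' * n1)%N; split; last by timeout 15 nia.
  by exists a, b, c'.
Qed.

Lemma CL_g p q : inS n0 n1 p q ->
  ((exists p1 q1, inS n0 n1 p1 q1 /\ (p1 + n0*(n1-1) = p + n1*n0)%N /\ (q1 + (n1-n0)*(n1-1) = q + n1*(n1-n0-1))%N)
  \/ (exists p3 q3, inS n0 n1 p3 q3 /\ (p3 + n1*(n0-1) = p + n1*n0)%N /\ (q3 + n1*(n1-n0) = q + n1*(n1-n0-1))%N)) ->
  (exists q', inS n0 n1 p q' /\ q = (q' + n1)%N) \/ (exists p' q', inS n0 n1 p' q' /\ p = (p' + A)%N /\ q = (q' + B)%N).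
Proof.
case/inS_norm=> a [b [c [hb [-> ->]]]].
case: nat_facts => f1 f2 f3 f4 f5.
case.
- case=> p1 [q1 [/inS_norm [a' [b' [c' [hb' [ep1 eq1]]]]] [E1 E2]]].
  have E : ((b + 1) * n0 + c * n1 = b' * n0 + c' * n1)%N.
    rewrite ep1 in E1. timeout 15 nia.
  case: (ltnP (b + 1) n1) => hb1.
  + case: (@uniq_lin _ _ _ _ E hb1 hb') => eb ec.
    left; exists (a' * n1 + b * (n1 - n0))%N; split; first by exists a', b, c.
    rewrite eq1 in E2. rewrite -eb in E2. timeout 15 nia.
  + have eb : b = (n1 - 1)%N by lia.
    right; exists (c * n1)%N, (a * n1)%N; split; first by exists a, 0%N, c; rewrite !mul0n add0n addn0.
    rewrite /A /B eb; timeout 15 nia.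
- case=> p3 [q3 [/inS_norm [a' [b' [c' [hb' [ep3 eq3]]]]] [E1 E2]]].
  have E : (b * n0 + (c + 1) * n1 = b' * n0 + c' * n1)%N.
    rewrite ep3 in E1. timeout 15 nia.
  case: (@uniq_lin _ _ _ _ E hb hb') => eb ec.
  left; exists (a' * n1 + b * (n1 - n0))%N; split; first by exists a', b, c.
  rewrite eq3 -eb in E2. timeout 15 nia.
Qed.

Lemma notS1 p' : inS n0 n1 p' B -> (p' + n1 = A)%N -> False.
Proof.
case/inS_norm=> a [b [c [hb [-> _]]]] E.
have E' : (b * n0 + (c + 1) * n1 = (n1 - 1) * n0 + 0 * n1)%N by rewrite /A in E; timeout 15 nia.
have : (n1 - 1 < n1)%N by lia.
move=> h; case: (@uniq_lin _ _ _ _ E' hb h) => _; lia.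
Qed.

Lemma notS2 q' : inS n0 n1 A q' -> (q' + n1 = B)%N -> False.
Proof.
case/inS_norm=> a [b [c [hb [E ->]]]] E2.
have E' : (b * n0 + c * n1 = (n1 - 1) * n0 + 0 * n1)%N by rewrite /A in E; timeout 15 nia.
have : (n1 - 1 < n1)%N by lia.
move=> h; case: (@uniq_lin _ _ _ _ E' hb h) => eb _.
rewrite /B eb in E2. timeout 15 nia.
Qed.

Lemma shift_f p q p' : inS n0 n1 p q -> p = p'.+1 -> inS n0 n1 (A + 1 - n1 + p') (B + q).
Proof.
case=> a [b [c [-> ->]]] hp.
have [r hr] : exists r, n1 = (n0 + r.+1)%N by exists (n1 - n0 - 1)%N; lia.
have [s hs] : exists s, n0 = s.+1 by exists (n0 - 1)%N; lia.
rewrite /A /B /inS hr hs in hp *.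
have -> : (s.+1 + r.+1 - 1 = s + r.+1)%N by lia.
have -> : (s.+1 + r.+1 - s.+1 = r.+1)%N by lia.
have -> : (s.+1 * (s + r.+1) + 1 - (s.+1 + r.+1) = s * (s + r.+1))%N.
  have -> : (s.+1 + r.+1 = (s + r.+1) + 1)%N by lia.
  rewrite mulSn; lia.
case: (posnP c) => hc.
- subst c. case: b hp => [|b] hp; first by (rewrite !mul0n in hp; lia).
  exists (a + r.+1)%N, b, s; split; nia.
- case: c hc hp => [//|c] _ hp.
  exists a, (b + (s + r.+1))%N, c; split; nia.
Qed.

Lemma shift_g p q q' : inS n0 n1 p q -> q = q'.+1 -> inS n0 n1 (A + p) (B + 1 - n1 + q').
Proof.
case=> a [b [c [-> ->]]] hq.
have [r hr] : exists r, n1 = (n0 + r.+1)%N by exists (n1 - n0 - 1)%N; lia.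
have [s hs] : exists s, n0 = s.+1 by exists (n0 - 1)%N; lia.
rewrite /A /B /inS hr hs in hq *.
have -> : (s.+1 + r.+1 - 1 = s + r.+1)%N by lia.
have -> : (s.+1 + r.+1 - s.+1 = r.+1)%N by lia.
have -> : ((s + r.+1) * r.+1 + 1 - (s.+1 + r.+1) = (s + r.+1) * r)%N.
  have -> : (s.+1 + r.+1 = (s + r.+1) + 1)%N by lia.
  rewrite mulnS; lia.
case: (posnP a) => ha.
- subst a. case: b hq => [|b] hq; first by (rewrite !mul0n in hq; lia).
  exists r, b, (c + s.+1)%N; split; nia.
- case: a ha hq => [//|a] _ hq.
  exists a, (b + (s + r.+1))%N, c; split; nia.
Qed.

End Nat.

Set Implicit Arguments. Unset Strict Implicit.
Import GRing.Theory.
Local Open Scope ring_scope.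

Definition mk (a b : nat) : 'X_{1..2} := (U_(tvar) *+ a + U_(uvar) *+ b)%MM.

Lemma mkt a b : mk a b tvar = a.
Proof. by rewrite /mk mnmDE !mulmnE !mnm1E /= mul1n mul0n addn0. Qed.
Lemma mku a b : mk a b uvar = b.
Proof. by rewrite /mk mnmDE !mulmnE !mnm1E /= mul1n mul0n. Qed.

Lemma I2 (i : 'I_2) : i = tvar \/ i = uvar.
Proof. case: i => [[|[|//]] h]; [left|right]; exact: val_inj. Qed.

Lemma mk_eta (m : 'X_{1..2}) : m = mk (m tvar) (m uvar).
Proof. by apply/mnmP => i; case: (I2 i) => ->; rewrite ?mkt ?mku. Qed.

Lemma mk_ext (m1 m2 : 'X_{1..2}) : m1 tvar = m2 tvar -> m1 uvar = m2 uvar -> m1 = m2.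
Proof. by move=> h1 h2; apply/mnmP => i; case: (I2 i) => ->. Qed.

Lemma mkD a b c d : (mk a b + mk c d)%MM = mk (a + c) (b + d).
Proof. by apply: mk_ext; rewrite mnmDE ?mkt ?mku. Qed.

Lemma mkB a b c d : (mk a b - mk c d)%MM = mk (a - c) (b - d).
Proof. by apply: mk_ext; rewrite mnmBE ?mkt ?mku. Qed.

Lemma mk_le (m1 m2 : 'X_{1..2}) : (m1 <= m2)%MM = (m1 tvar <= m2 tvar)%N && (m1 uvar <= m2 uvar)%N.
Proof.
apply/mnm_lepP/andP => [h|[h1 h2] i]; first by split; apply: h.
by case: (I2 i) => ->.
Qed.

Section Mp.
Variable k : fieldType.
Local Notation P := {mpoly k[2]}.

Lemma mono_mk a b : mono k a b = 'X_[mk a b].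
Proof. by rewrite /mono /mk mpolyXD -!mpolyXn. Qed.

Lemma XX (m1 m2 : 'X_{1..2}) : 'X_[m1] * 'X_[m2] = 'X_[(m1 + m2)%MM] :> P.
Proof. by rewrite mpolyXD. Qed.

Lemma coefMX (p : P) (e m : 'X_{1..2}) :
  (p * 'X_[e])@_m = if (e <= m)%MM then p@_(m - e)%MM else 0.
Proof.
case: ifP => h.
  by rewrite -{1}(submK h) addmC mcoeffMX.
apply/eqP; rewrite mcoeff_eq0; apply/negP.
rewrite (perm_mem (msuppMX _ _)) => /mapP [m' _ em].
by rewrite em lem_addr in h.
Qed.

Lemma coefXM (p : P) (e m : 'X_{1..2}) :
  ('X_[e] * p)@_m = if (e <= m)%MM then p@_(m - e)%MM else 0.
Proof. by rewrite mulrC coefMX. Qed.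

Lemma mderiv_mk i a b : mderiv i ('X_[mk a b] : P) =
  if i == tvar then a%:R *: 'X_[mk a.-1 b] else b%:R *: 'X_[mk a b.-1].
Proof.
rewrite mderivX; case: (I2 i) => ->; rewrite /= ?mkt ?mku; congr (_ *: 'X_[_]);
  apply: mk_ext; rewrite mnmBE mnm1E ?mkt ?mku /=; lia.
Qed.

Lemma vf_mk (f g : P) a b : vf (f, g) 'X_[mk a b] =
  f * (a%:R *: 'X_[mk a.-1 b]) + g * (b%:R *: 'X_[mk a b.-1]).
Proof. by rewrite /vf /= !mderiv_mk. Qed.

Section S.
Variables n0 n1 : nat.
Definition SS (m : 'X_{1..2}) := inS n0 n1 (m tvar) (m uvar).

Lemma inS_add x y x' y' : inS n0 n1 x y -> inS n0 n1 x' y' -> inS n0 n1 (x + x') (y + y').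
Proof. case=> a [b [c [-> ->]]] [a' [b' [c' [-> ->]]]]; exists (a+a')%N, (b+b')%N, (c+c')%N; split; lia. Qed.

Lemma kS0 : inkS n0 n1 (0 : P).
Proof. by move=> m; rewrite msupp0. Qed.

Lemma kSD (p q : P) : inkS n0 n1 p -> inkS n0 n1 q -> inkS n0 n1 (p + q).
Proof. by move=> hp hq m /msuppD_le; rewrite mem_cat => /orP [/hp|/hq]. Qed.

Lemma kSZ c (p : P) : inkS n0 n1 p -> inkS n0 n1 (c *: p).
Proof. by move=> hp m /msuppZ_le /hp. Qed.

Lemma kSM (p q : P) : inkS n0 n1 p -> inkS n0 n1 q -> inkS n0 n1 (p * q).
Proof.
move=> hp hq m /msuppM_le /allpairsP [[m1 m2] [/= /hp h1 /hq h2 ->]].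
by rewrite /inS mnmDE mnmDE; apply: inS_add.
Qed.

Lemma kSX m : SS m -> inkS n0 n1 ('X_[m] : P).
Proof. by move=> h m'; rewrite msuppX mem_seq1 => /eqP ->. Qed.

Lemma kS1 : inkS n0 n1 (1 : P).
Proof. by move=> m; rewrite msupp1 mem_seq1 => /eqP ->; exists 0%N, 0%N, 0%N; rewrite !mnm0E. Qed.

Lemma kSsupp (p : P) m : inkS n0 n1 p -> m \in msupp p -> SS m.
Proof. by move=> h /h. Qed.

End S.
End Mp.


Section Der.
Variable k : fieldType.
Local Notation P := {mpoly k[2]}.
Variables n0 n1 : nat.

Definition isDerOn (D : P -> P) :=
  (forall (c : k) p q, inkS n0 n1 p -> inkS n0 n1 q -> D (c *: p + q) = c *: D p + D q)
  /\ (forall p q, inkS n0 n1 p -> inkS n0 n1 q -> D (p * q) = p * D q + q * D p).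

Lemma isDerkS_On D : isDerkS n0 n1 D -> isDerOn D.
Proof. by case. Qed.

Section D1.
Variable D : P -> P.
Hypothesis hD : isDerOn D.

Lemma Der0 : D 0 = 0.
Proof.
case: hD => hl _; have := hl 1 0 0 (kS0 _ _) (kS0 _ _).
rewrite !scale1r addr0 => /(congr1 (fun x => x - D 0)); rewrite addrK subrr ?scale1r => h; symmetry; exact: h.
Qed.

Lemma DerD p q : inkS n0 n1 p -> inkS n0 n1 q -> D (p + q) = D p + D q.
Proof. by case: hD => hl _ hp hq; rewrite -[p]scale1r hl // !scale1r. Qed.

Lemma DerZ c p : inkS n0 n1 p -> D (c *: p) = c *: D p.
Proof. by case: hD => hl _ hp; rewrite -[c *: p]addr0 hl ?Der0 ?addr0 //; apply: kS0. Qed.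

Lemma Der1 : D 1 = 0.
Proof.
case: hD => _ hm; have := hm 1 1 (kS1 _ _) (kS1 _ _).
rewrite mulr1 mul1r => /(congr1 (fun x => x - D 1)); rewrite addrK subrr ?scale1r => h; symmetry; exact: h.
Qed.

Lemma kSX_pow (p : P) n : inkS n0 n1 p -> inkS n0 n1 (p ^+ n).
Proof. by move=> hp; elim: n => [|n IH]; [exact: kS1|rewrite exprS; apply: kSM]. Qed.

Lemma DerX p n : inkS n0 n1 p -> D (p ^+ n.+1) = n.+1%:R *: (p ^+ n * D p).
Proof.
move=> hp; elim: n => [|n IH]; first by rewrite expr1 expr0 mul1r scale1r.
case: hD => _ hm.
rewrite exprS hm //; last exact: kSX_pow.
rewrite IH -!mul_mpolyC !rmorph_nat !exprS. ring.
Qed.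

End D1.

Lemma vf_lin fg c (p q : P) : vf fg (c *: p + q) = c *: vf fg p + vf fg q.
Proof. rewrite /vf !mderivD !mderivZ -!mul_mpolyC. ring. Qed.

Lemma vf_M fg (p q : P) : vf fg (p * q) = p * vf fg q + q * vf fg p.
Proof. rewrite /vf !mderivM. ring. Qed.

Lemma vf_On fg : isDerOn (vf fg).
Proof. by split=> *; [apply: vf_lin | apply: vf_M]. Qed.

End Der.


Section Gen.
Variable k : fieldType.
Local Notation P := {mpoly k[2]}.
Variables n0 n1 : nat.
Hypotheses (hchar : [pchar k] =i pred0) (hn0 : (0 < n0)%N) (hn01 : (n0 < n1)%N) (hcop : coprime n0 n1).

Local Notation X := ('X_[mk 0 n1] : P).
Local Notation Y := ('X_[mk n0 (n1 - n0)] : P).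
Local Notation Z := ('X_[mk n1 0] : P).

Lemma powX a b j : ('X_[mk a b] : P) ^+ j = 'X_[mk (a * j) (b * j)].
Proof. by rewrite mpolyXn; congr 'X_[_]; apply: mk_ext; rewrite mulmnE ?mkt ?mku. Qed.

Lemma XXmk a b c d : ('X_[mk a b] : P) * 'X_[mk c d] = 'X_[mk (a + c) (b + d)].
Proof. by rewrite XX mkD. Qed.

Lemma SSmk a b : SS n0 n1 (mk a b) = inS n0 n1 a b.
Proof. by rewrite /SS mkt mku. Qed.

Lemma kSX_ : inkS n0 n1 X.
Proof. by apply: kSX; rewrite SSmk; exists 1%N, 0%N, 0%N; split; lia. Qed.
Lemma kSY_ : inkS n0 n1 Y.
Proof. by apply: kSX; rewrite SSmk; exists 0%N, 1%N, 0%N; split; lia. Qed.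
Lemma kSZ_ : inkS n0 n1 Z.
Proof. by apply: kSX; rewrite SSmk; exists 0%N, 0%N, 1%N; split; lia. Qed.

Lemma agree (D D' : P -> P) : isDerOn n0 n1 D -> isDerOn n0 n1 D' ->
  D X = D' X -> D Y = D' Y -> D Z = D' Z -> forall h, inkS n0 n1 h -> D h = D' h.
Proof.
move=> hD hD' eX eY eZ.
have Q1 : forall p q, inkS n0 n1 p -> inkS n0 n1 q -> D p = D' p -> D q = D' q -> D (p * q) = D' (p * q).
  move=> p q hp hq e1 e2; case: hD => _ hm; case: hD' => _ hm'.
  by rewrite hm // hm' // e1 e2.
have Qp : forall p n, inkS n0 n1 p -> D p = D' p -> D (p ^+ n) = D' (p ^+ n).
  move=> p [|n] hp e; first by rewrite !expr0 (Der1 hD) (Der1 hD').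
  by rewrite (DerX hD) // (DerX hD') // e.
have Qm : forall m, SS n0 n1 m -> D 'X_[m] = D' 'X_[m].
  move=> m [a [b [c [e1 e2]]]].
  have -> : ('X_[m] : P) = X ^+ a * (Y ^+ b * Z ^+ c).
    rewrite !powX !XXmk; congr 'X_[_]; rewrite [LHS]mk_eta e1 e2; congr mk; lia.
  have kX := kSX_; have kY := kSY_; have kZ := kSZ_.

  apply: (Q1); [exact: kSX_pow| apply: kSM; exact: kSX_pow | exact: (Qp)|].
  apply: (Q1); [exact: kSX_pow|exact: kSX_pow|exact: (Qp)|exact: (Qp)].

move=> h hh; rewrite (mpolyE h).
suff : forall s, {subset s <= msupp h} ->
   inkS n0 n1 (\sum_(m <- s) h@_m *: 'X_[m]) /\
   D (\sum_(m <- s) h@_m *: 'X_[m]) = D' (\sum_(m <- s) h@_m *: 'X_[m]).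
  by move=> /(_ (msupp h)) [] // _ ->.
elim=> [|m s IH] hs; first by rewrite big_nil (Der0 hD) (Der0 hD'); split=> //; apply: kS0.

have hm : SS n0 n1 m by apply: hh; apply: hs; rewrite mem_head.
case: IH => [x hx|hk he]; first by apply: hs; rewrite inE hx orbT.
rewrite big_cons; split; first by apply: kSD => //; apply: kSZ; apply: kSX.
case: hD => hl _; case: hD' => hl' _.
by rewrite hl ?hl' ?Qm ?he //; apply: kSX.
Qed.

Lemma DerX' (D : P -> P) p n : isDerOn n0 n1 D -> inkS n0 n1 p -> (0 < n)%N ->
  D (p ^+ n) = n%:R *: (p ^+ (n - 1) * D p).
Proof. by move=> hD hp; case: n => // n _; rewrite (DerX hD) // subn1. Qed.

Definition e1 := mk (n0 * (n1 - 1)) ((n1 - n0) * (n1 - 1)).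
Definition e2 := mk (n1 * n0) (n1 * (n1 - n0 - 1)).
Definition e3 := mk (n1 * (n0 - 1)) (n1 * (n1 - n0)).

Lemma rel_eq (D : P -> P) : isDerOn n0 n1 D ->
  n1%:R *: ('X_[e1] * D Y) = n0%:R *: ('X_[e3] * D Z) + (n1 - n0)%:R *: ('X_[e2] * D X).
Proof.
move=> hD.
have Yrel : Y ^+ n1 = X ^+ (n1 - n0) * Z ^+ n0.
  by rewrite !powX XXmk; congr 'X_[mk _ _]; lia.
have := congr1 D Yrel.
case: (hD) => _ hm.
rewrite hm; try (apply: kSX_pow; rewrite ?kSX_ ?kSZ_ //).
rewrite (DerX' hD) ?kSY_ //; last lia.
rewrite (DerX' hD) ?kSZ_ //.
rewrite (DerX' hD) ?kSX_ //; last lia.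
have E1 : Y ^+ (n1 - 1) = 'X_[e1] by rewrite powX.
have E3 : X ^+ (n1 - n0) * Z ^+ (n0 - 1) = 'X_[e3].
  by rewrite !powX XXmk /e3; congr 'X_[mk _ _]; lia.
have E2 : Z ^+ n0 * X ^+ (n1 - n0 - 1) = 'X_[e2].
  by rewrite !powX XXmk /e2; congr 'X_[mk _ _]; lia.
rewrite E1 !scalerAr !mulrA E3 E2 => -> //.
all: try (exact: kSX_ || exact: kSY_ || exact: kSZ_).
Qed.

Lemma decomp (p : P) (f1 f2 : 'X_{1..2}) :
  (forall m, m \in msupp p -> (exists m', SS n0 n1 m' /\ m = (m' + f1)%MM) \/ (exists m', SS n0 n1 m' /\ m = (m' + f2)%MM)) ->
  exists c c', inkS n0 n1 c /\ inkS n0 n1 c' /\ p = c * 'X_[f1] + c' * 'X_[f2].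
Proof.
move=> H.
suff : forall s, {subset s <= msupp p} -> exists c c', inkS n0 n1 c /\ inkS n0 n1 c' /\
   \sum_(m <- s) p@_m *: 'X_[m] = c * 'X_[f1] + c' * 'X_[f2].
  by move=> /(_ (msupp p) (fun x h => h)) [c [c' [h1 [h2 e]]]]; exists c, c'; rewrite -e -mpolyE.
elim=> [|m s IH] hs.
  by exists 0, 0; rewrite big_nil !mul0r addr0; split; [apply: kS0|split; [apply: kS0|]].
case: IH => [x hx|c [c' [h1 [h2 e]]]]; first by apply: hs; rewrite inE hx orbT.
rewrite big_cons e.
case: (H m (hs _ (mem_head _ _))) => [[m' [hm' ->]]|[m' [hm' ->]]].
- exists (p@_(m' + f1)%MM *: 'X_[m'] + c), c'; split; first by apply: kSD => //; apply: kSZ; apply: kSX.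
  split=> //; rewrite mpolyXD mulrDl -scalerAl; ring.
- exists c, (p@_(m' + f2)%MM *: 'X_[m'] + c'); split=> //; split; first by apply: kSD => //; apply: kSZ; apply: kSX.
  rewrite mpolyXD mulrDl -scalerAl; ring.
Qed.

Lemma natr_neq0 n : (0 < n)%N -> (n%:R : k) != 0.
Proof. by move=> hn; move/pcharf0P: hchar => ->; rewrite -lt0n. Qed.

Lemma supp_Z (p : P) (c : k) m : m \in msupp (c *: p) -> m \in msupp p.
Proof. exact: msuppZ_le. Qed.

Lemma DZ_decomp (D : P -> P) : isDerkS n0 n1 D ->
  exists c0 c1, inkS n0 n1 c0 /\ inkS n0 n1 c1 /\
    n1%:R^-1 *: D Z = c0 * Z + c1 * 'X_[mk (n0 * (n1 - 1)) ((n1 - 1) * (n1 - n0))].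
Proof.
move=> hD; case: (hD) => hk _ _.
have hDZ := hk _ kSZ_; have hDY := hk _ kSY_; have hDX := hk _ kSX_.
apply: decomp => m /supp_Z hm.
have hSm : SS n0 n1 m := hDZ _ hm.
have R := congr1 (mcoeff (m + e3)%MM) (rel_eq (isDerkS_On hD)).
rewrite mcoeffD !mcoeffZ !coefXM lem_addl addmK in R.
have L : ((exists p1 q1, inS n0 n1 p1 q1 /\ (p1 + n0*(n1-1) = m tvar + n1*(n0-1))%N /\ (q1 + (n1-n0)*(n1-1) = m uvar + n1*(n1-n0))%N)
  \/ (exists p2 q2, inS n0 n1 p2 q2 /\ (p2 + n1*n0 = m tvar + n1*(n0-1))%N /\ (q2 + n1*(n1-n0-1) = m uvar + n1*(n1-n0))%N)).
  case h1 : ((e1 <= m + e3)%MM && ((D Y)@_(m + e3 - e1)%MM != 0)).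
    case/andP: h1 => le nz; left.
    have hS : SS n0 n1 (m + e3 - e1)%MM by apply: hDY; rewrite mcoeff_msupp.
    exists ((m + e3 - e1)%MM tvar), ((m + e3 - e1)%MM uvar); split => //.
    move: (mnm_lepP le tvar) (mnm_lepP le uvar); rewrite !mnmBE !(mnmDE _ m) /e1 /e3 !mkt !mku; split; lia.
  case h2 : ((e2 <= m + e3)%MM && ((D X)@_(m + e3 - e2)%MM != 0)).
    case/andP: h2 => le nz; right.
    have hS : SS n0 n1 (m + e3 - e2)%MM by apply: hDX; rewrite mcoeff_msupp.
    exists ((m + e3 - e2)%MM tvar), ((m + e3 - e2)%MM uvar); split => //.
    move: (mnm_lepP le tvar) (mnm_lepP le uvar); rewrite !mnmBE !(mnmDE _ m) /e2 /e3 !mkt !mku; split; lia.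
  exfalso.
  have z1 : (if (e1 <= m + e3)%MM then (D Y)@_(m + e3 - e1)%MM else 0) = 0.
    by case: ifP h1 => // _ /negbT; rewrite negbK => /eqP.
  have z2 : (if (e2 <= m + e3)%MM then (D X)@_(m + e3 - e2)%MM else 0) = 0.
    by case: ifP h2 => // _ /negbT; rewrite negbK => /eqP.
  rewrite z1 z2 !mulr0 addr0 in R.
  move/eqP: R; rewrite eq_sym mulf_eq0 (negbTE (natr_neq0 hn0)) /=.
  by rewrite mcoeff_eq0 hm.
case: (@CL_f n0 n1 hn0 hn01 hcop _ _ hSm L) => [[p' [hp' e]]|[p' [q' [hp' [e e']]]]].
- left; exists (mk p' (m uvar)); rewrite SSmk; split=> //.
  by apply: mk_ext; rewrite mnmDE ?mkt ?mku; lia.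
- right; exists (mk p' q'); rewrite SSmk; split=> //.
  by apply: mk_ext; rewrite mnmDE ?mkt ?mku; lia.
Qed.

Lemma DX_decomp (D : P -> P) : isDerkS n0 n1 D ->
  exists c2 c3, inkS n0 n1 c2 /\ inkS n0 n1 c3 /\
    n1%:R^-1 *: D X = c2 * X + c3 * 'X_[mk (n0 * (n1 - 1)) ((n1 - 1) * (n1 - n0))].
Proof.
move=> hD; case: (hD) => hk _ _.
have hDZ := hk _ kSZ_; have hDY := hk _ kSY_; have hDX := hk _ kSX_.
apply: decomp => m /supp_Z hm.
have hSm : SS n0 n1 m := hDX _ hm.
have R := congr1 (mcoeff (m + e2)%MM) (rel_eq (isDerkS_On hD)).
rewrite mcoeffD !mcoeffZ !coefXM lem_addl addmK in R.
have L : ((exists p1 q1, inS n0 n1 p1 q1 /\ (p1 + n0*(n1-1) = m tvar + n1*n0)%N /\ (q1 + (n1-n0)*(n1-1) = m uvar + n1*(n1-n0-1))%N)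
  \/ (exists p3 q3, inS n0 n1 p3 q3 /\ (p3 + n1*(n0-1) = m tvar + n1*n0)%N /\ (q3 + n1*(n1-n0) = m uvar + n1*(n1-n0-1))%N)).
  case h1 : ((e1 <= m + e2)%MM && ((D Y)@_(m + e2 - e1)%MM != 0)).
    case/andP: h1 => le nz; left.
    have hS : SS n0 n1 (m + e2 - e1)%MM by apply: hDY; rewrite mcoeff_msupp.
    exists ((m + e2 - e1)%MM tvar), ((m + e2 - e1)%MM uvar); split => //.
    move: (mnm_lepP le tvar) (mnm_lepP le uvar); rewrite !mnmBE !(mnmDE _ m) /e1 /e2 !mkt !mku; split; lia.
  case h3 : ((e3 <= m + e2)%MM && ((D Z)@_(m + e2 - e3)%MM != 0)).
    case/andP: h3 => le nz; right.
    have hS : SS n0 n1 (m + e2 - e3)%MM by apply: hDZ; rewrite mcoeff_msupp.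
    exists ((m + e2 - e3)%MM tvar), ((m + e2 - e3)%MM uvar); split => //.
    move: (mnm_lepP le tvar) (mnm_lepP le uvar); rewrite !mnmBE !(mnmDE _ m) /e3 /e2 !mkt !mku; split; lia.
  exfalso.
  have z1 : (if (e1 <= m + e2)%MM then (D Y)@_(m + e2 - e1)%MM else 0) = 0.
    by case: ifP h1 => // _ /negbT; rewrite negbK => /eqP.
  have z3 : (if (e3 <= m + e2)%MM then (D Z)@_(m + e2 - e3)%MM else 0) = 0.
    by case: ifP h3 => // _ /negbT; rewrite negbK => /eqP.
  rewrite z1 z3 !mulr0 add0r in R.
  have hd : (0 < n1 - n0)%N by lia.
  move/eqP: R; rewrite eq_sym mulf_eq0 (negbTE (natr_neq0 hd)) /=.
  by rewrite mcoeff_eq0 hm.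
case: (@CL_g n0 n1 hn0 hn01 hcop _ _ hSm L) => [[q' [hq' e]]|[p' [q' [hp' [e e']]]]].
- left; exists (mk (m tvar) q'); rewrite SSmk; split=> //.
  by apply: mk_ext; rewrite mnmDE ?mkt ?mku; lia.
- right; exists (mk p' q'); rewrite SSmk; split=> //.
  by apply: mk_ext; rewrite mnmDE ?mkt ?mku; lia.
Qed.

End Gen.





Section Main.
Variable k : fieldType.
Local Notation P := {mpoly k[2]}.
Variables n0 n1 : nat.
Hypotheses (hchar : [pchar k] =i pred0) (hn0 : (0 < n0)%N) (hn01 : (n0 < n1)%N) (hcop : coprime n0 n1).

Local Notation X := ('X_[mk 0 n1] : P).
Local Notation Y := ('X_[mk n0 (n1 - n0)] : P).
Local Notation Z := ('X_[mk n1 0] : P).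
Local Notation A := (n0 * (n1 - 1))%N.
Local Notation B := ((n1 - 1) * (n1 - n0))%N.

Lemma dtZ : mderiv tvar Z = n1%:R *: 'X_[mk (n1 - 1) 0].
Proof. by rewrite mderiv_mk eqxx subn1. Qed.
Lemma duZ : mderiv uvar Z = 0.
Proof. by rewrite mderiv_mk /= scale0r. Qed.
Lemma dtX : mderiv tvar X = 0.
Proof. by rewrite mderiv_mk eqxx scale0r. Qed.
Lemma duX : mderiv uvar X = n1%:R *: 'X_[mk 0 (n1 - 1)].
Proof. by rewrite mderiv_mk /= subn1. Qed.

Lemma vfZ (f g : P) : vf (f, g) Z = n1%:R *: (f * 'X_[mk (n1 - 1) 0]).
Proof. by rewrite /vf /= dtZ duZ mulr0 addr0 scalerAr. Qed.
Lemma vfX (f g : P) : vf (f, g) X = n1%:R *: (g * 'X_[mk 0 (n1 - 1)]).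
Proof. by rewrite /vf /= dtX duX mulr0 add0r scalerAr. Qed.

Lemma XA1 : 'X_[mk 1 0] * 'X_[mk (n1 - 1) 0] = Z.
Proof. by rewrite XXmk; congr 'X_[mk _ _]; lia. Qed.
Lemma XA2 : 'X_[mk (A + 1 - n1) B] * 'X_[mk (n1 - 1) 0] = 'X_[mk A B] :> P.
Proof. rewrite XXmk; congr 'X_[mk _ _]; nia. Qed.
Lemma XA3 : 'X_[mk 0 1] * 'X_[mk 0 (n1 - 1)] = X.
Proof. by rewrite XXmk; congr 'X_[mk _ _]; lia. Qed.
Lemma XA4 : 'X_[mk A (B + 1 - n1)] * 'X_[mk 0 (n1 - 1)] = 'X_[mk A B] :> P.
Proof. rewrite XXmk; congr 'X_[mk _ _]; nia. Qed.

Lemma vf0 fg : vf fg (0 : P) = 0.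
Proof. by rewrite /vf !mderiv0 !mulr0 addr0. Qed.

Lemma gen_der (fg : P * P) : (forall m, SS n0 n1 m -> inkS n0 n1 (vf fg 'X_[m])) -> isDerkS n0 n1 (vf fg).
Proof.
move=> H; split; last 2 first.
- by move=> *; apply: vf_lin.
- by move=> *; apply: vf_M.
move=> h hh; rewrite (mpolyE h).
suff : forall s, {subset s <= msupp h} -> inkS n0 n1 (vf fg (\sum_(m <- s) h@_m *: 'X_[m])).
  by apply.
elim=> [|m s IH] hs; first by rewrite big_nil vf0; apply: kS0.
rewrite big_cons vf_lin; apply: kSD; last by apply: IH => x hx; apply: hs; rewrite inE hx orbT.
by apply: kSZ; apply: H; apply: hh; apply: hs; rewrite mem_head.
Qed.

Lemma kS_sX (c : k) m : (c = 0 \/ SS n0 n1 m) -> inkS n0 n1 (c *: ('X_[m] : P)).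
Proof. by case=> [->|h]; [rewrite scale0r; apply: kS0 | apply: kSZ; apply: kSX]. Qed.

Lemma der_G0 : isDerkS n0 n1 (vf (('X_[mk 1 0] : P), 0)).
Proof.
apply: gen_der => m; rewrite [m]mk_eta SSmk => hm.
rewrite vf_mk mul0r addr0 -scalerAr XXmk; apply: kS_sX.
case: (m tvar) hm => [|a] hm; [by left | right]; rewrite SSmk /=; congr inS: hm; lia.
Qed.

Lemma der_G1 : isDerkS n0 n1 (vf (('X_[mk (A + 1 - n1) B] : P), 0)).
Proof.
apply: gen_der => m; rewrite [m]mk_eta SSmk => hm.
rewrite vf_mk mul0r addr0 -scalerAr XXmk; apply: kS_sX.
case E: (m tvar) hm => [|a] hm; [by left | right]; rewrite SSmk /=.
exact: (@shift_f n0 n1 hn0 hn01 hcop _ _ a hm erefl).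
Qed.

Lemma der_G2 : isDerkS n0 n1 (vf (0, ('X_[mk 0 1] : P))).
Proof.
apply: gen_der => m; rewrite [m]mk_eta SSmk => hm.
rewrite vf_mk mul0r add0r -scalerAr XXmk; apply: kS_sX.
case: (m uvar) hm => [|a] hm; [by left | right]; rewrite SSmk /=; congr inS: hm; lia.
Qed.

Lemma der_G3 : isDerkS n0 n1 (vf (0, ('X_[mk A (B + 1 - n1)] : P))).
Proof.
apply: gen_der => m; rewrite [m]mk_eta SSmk => hm.
rewrite vf_mk mul0r add0r -scalerAr XXmk; apply: kS_sX.
case E: (m uvar) hm => [|a] hm; [by left | right]; rewrite SSmk /=.
exact: (@shift_g n0 n1 hn0 hn01 hcop _ _ a hm erefl).
Qed.

Definition famG := fam4 (('X_[mk 1 0] : P), 0) (('X_[mk (A + 1 - n1) B] : P), 0)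
  (0, ('X_[mk 0 1] : P)) (0, ('X_[mk A (B + 1 - n1)] : P)).

Lemma X_neq0 m : ('X_[m] : P) != 0.
Proof.
apply/eqP => h; have := congr1 (mcoeff m) h.
by rewrite mcoeffX eqxx mcoeff0 => /eqP; rewrite oner_eq0.
Qed.

Lemma span_all D : isDerkS n0 n1 D -> inSpan n0 n1 famG predT D.
Proof.
move=> hD.
case: (DZ_decomp hchar hn0 hn01 hcop hD) => c0 [c1 [h0 [h1 eZ]]].
case: (DX_decomp hchar hn0 hn01 hcop hD) => c2 [c3 [h2 [h3 eX]]].
set F := c0 * 'X_[mk 1 0] + c1 * 'X_[mk (A + 1 - n1) B].
set Gg := c2 * 'X_[mk 0 1] + c3 * 'X_[mk A (B + 1 - n1)].
exists (fun i : 'I_4 => nth 0 [:: c0; c1; c2; c3] i); split.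
  by case=> [[|[|[|[|//]]]] hi].
have E : forall h, \sum_(i < 4 | predT i) nth 0 [:: c0; c1; c2; c3] i * vf (famG i) h = vf (F, Gg) h.
  move=> h; rewrite !big_ord_recl big_ord0 /= /vf /= /F /Gg; ring.
move=> h hh; rewrite E.
have hn1 : (0 < n1)%N by lia.
have n1nz := natr_neq0 hchar hn1.
have eXv : vf (F, Gg) X = D X.
  by rewrite vfX /Gg mulrDl -!mulrA XA3 XA4 -eX scalerA mulfV // scale1r.
have eZv : vf (F, Gg) Z = D Z.
  by rewrite vfZ /F mulrDl -!mulrA XA1 XA2 -eZ scalerA mulfV // scale1r.
have eYv : vf (F, Gg) Y = D Y.
  have r1 := rel_eq hn0 hn01 hcop (isDerkS_On hD).
  have r2 := rel_eq hn0 hn01 hcop (@vf_On _ n0 n1 (F, Gg)).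
  rewrite eXv eZv -r1 in r2.
  exact: (mulfI (X_neq0 _) (scalerI n1nz r2)).
exact: (agree hn0 hn01 hcop (isDerkS_On hD) (@vf_On _ n0 n1 (F, Gg)) (esym eXv) (esym eYv) (esym eZv) hh).

Qed.

Lemma minimal j : ~ inSpan n0 n1 famG (fun i => i != j) (vf (famG j)).
Proof.
case=> c [hc H].
have hn1 : (0 < n1)%N by lia.
have n1nz := natr_neq0 hchar hn1.
have hA : (0 < A)%N by nia.
have hB : (0 < B)%N by nia.
have kZ := kSZ_ hn0 hn01 hcop (k:=k); have kX := kSX_ hn0 hn01 hcop (k:=k).
case: j H => [[|[|[|[|//]]]] hj] H.
- have := H Z kZ; rewrite big_mkcond !big_ord_recl big_ord0 /=.
  rewrite !vfZ !mul0r !scaler0 !mulr0 !addr0 add0r XA1 XA2.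
  move/(congr1 (mcoeff (mk n1 0))); rewrite -scalerAr !mcoeffZ mcoeffX eqxx coefMX mk_le mkt mku.
  rewrite !mkt !mku leqn0 (negbTE (lt0n_neq0 hB)) andbF mulr0 mulr1 => /eqP; by rewrite (negbTE n1nz).
- have := H Z kZ; rewrite big_mkcond !big_ord_recl big_ord0 /=.
  rewrite !vfZ !mul0r !scaler0 !mulr0 !addr0 XA1 XA2.
  move/(congr1 (mcoeff (mk A B))); rewrite -scalerAr !mcoeffZ mcoeffX eqxx coefMX mk_le !mkt !mku mulr1.
  case: ifP => [/andP [le _]|_]; last by move/eqP; rewrite mulr0 (negbTE n1nz).
  case E: ((c ord0)@_(mk A B - mk n1 0)%MM == 0).
    by move/eqP; rewrite (eqP E) mulr0 (negbTE n1nz).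
  move=> _.
  have : SS n0 n1 (mk A B - mk n1 0)%MM by apply: (hc ord0); rewrite mcoeff_msupp E.
  rewrite mkB SSmk subn0 => hS.
  apply: (@notS1 n0 n1 hn0 hn01 hcop _ hS); lia.
- have := H X kX; rewrite big_mkcond !big_ord_recl big_ord0 /=.
  rewrite !vfX !mul0r !scaler0 !mulr0 !addr0 !add0r XA3 XA4.
  move/(congr1 (mcoeff (mk 0 n1))); rewrite -scalerAr !mcoeffZ mcoeffX eqxx coefMX mk_le mkt mku.
  rewrite !mkt !mku leqn0 (negbTE (lt0n_neq0 hA)) /= mulr0 mulr1 => /eqP; by rewrite (negbTE n1nz).
- have := H X kX; rewrite big_mkcond !big_ord_recl big_ord0 /=.
  rewrite !vfX !mul0r !scaler0 !mulr0 !addr0 !add0r XA3 XA4.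
  move/(congr1 (mcoeff (mk A B))); rewrite -scalerAr !mcoeffZ mcoeffX eqxx coefMX mk_le !mkt !mku mulr1.
  case: ifP => [/andP [_ le]|_]; last by move/eqP; rewrite mulr0 (negbTE n1nz).
  set i2 := lift ord0 (lift ord0 ord0).
  case E: ((c i2)@_(mk A B - mk 0 n1)%MM == 0).
    by move/eqP; rewrite (eqP E) mulr0 (negbTE n1nz).
  move=> _.
  have : SS n0 n1 (mk A B - mk 0 n1)%MM by apply: (hc i2); rewrite mcoeff_msupp E.
  rewrite mkB SSmk subn0 => hS.
  apply: (@notS2 n0 n1 hn0 hn01 hcop _ hS); lia.
Qed.

Lemma main_gen : minGenDer n0 n1 famG.
Proof.
split.
- case=> [[|[|[|[|//]]]] hi] /=.
  + exact: der_G0.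
  + exact: der_G1.
  + exact: der_G2.
  + exact: der_G3.
- exact: span_all.
- exact: minimal.
Qed.

End Main.





Unset Implicit Arguments. Set Strict Implicit.

Lemma S1N_eq (n0 n1 : nat) : (0 < n0)%N -> (n0 < n1)%N -> (forall x : nat, numSg n0 n1 x) -> n0 = 1%N.
Proof.
move=> h0 h1 /(_ 1%N) [i [j e]].
case: j e => [|j] e; last by nia.
move: e; rewrite mul0n addn0 => /esym/eqP; rewrite muln_eq1 => /andP [_ /eqP] //.
Qed.

Lemma S2N_eq (n0 n1 : nat) : (0 < n0)%N -> (n0 < n1)%N -> (forall x : nat, numSg (n1 - n0) n1 x) -> (n1 - n0 = 1)%N.
Proof.
move=> h0 h1 /(_ 1%N) [i [j e]].
case: j e => [|j] e; last by nia.
move: e; rewrite mul0n addn0 => /esym/eqP; rewrite muln_eq1 => /andP [_ /eqP] //.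
Qed.

Theorem proposition3p1 (k : fieldType) (n0 n1 : nat) :
  [pchar k] =i pred0 -> (0 < n0)%N -> (n0 < n1)%N -> coprime n0 n1 ->
  let S1N := forall x : nat, numSg n0 n1 x in
  let S2N := forall x : nat, numSg (n1 - n0) n1 x in
  let dt := fun f : {mpoly k[2]} => (f, 0 : {mpoly k[2]}) in
  let du := fun g : {mpoly k[2]} => (0 : {mpoly k[2]}, g) in
  [/\ (~ S1N -> ~ S2N ->
         minGenDer n0 n1 (fam4
           (dt (mono k 1 0))
           (dt (mono k ((n0 * (n1 - 1) + 1) - n1) ((n1 - 1) * (n1 - n0))))
           (du (mono k 0 1))
           (du (mono k (n0 * (n1 - 1)) (((n1 - 1) * (n1 - n0) + 1) - n1))))),
      (S1N -> ~ S2N ->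
         minGenDer n0 n1 (fam4
           (dt (mono k 1 0))
           (dt (mono k 0 (1 + (n1 - 2) * n1)))
           (du (mono k 0 1))
           (du (mono k (n1 - 1) ((n1 - 1) * (n1 - 2)))))),
      (~ S1N -> S2N ->
         minGenDer n0 n1 (fam4
           (dt (mono k 1 0))
           (dt (mono k ((n0 * (n1 - 1) + 1) - n1) (n1 - 1)))
           (du (mono k 0 1))
           (du (mono k (n0 * (n1 - 1)) 0))))
    & (S1N -> S2N ->
         minGenDer n0 n1 (fam4
           (dt (mono k 1 0))
           (dt (mono k 0 1))
           (du (mono k 0 1))
           (du (mono k 1 0)))) ].
Proof.
move=> hchar hn0 hn01 hcop S1N S2N dt du.
have M := main_gen hchar hn0 hn01 hcop.
rewrite /famG in M.
rewrite /dt /du !mono_mk.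
split.
- by move=> _ _.
- move=> /(S1N_eq _ _ hn0 hn01) e0 _; subst n0.
  have -> : (1 + (n1 - 2) * n1 = (n1 - 1) * (n1 - 1))%N by nia.
  have e1 : ((n1 - 1) * (n1 - 1) + 1 - n1 = (n1 - 1) * (n1 - 2))%N by nia.
  have e2 : (1 * (n1 - 1) + 1 - n1 = 0)%N by lia.
  by rewrite e1 e2 mul1n in M.
- move=> _ /(S2N_eq _ _ hn0 hn01) e.
  rewrite e muln1 in M.
  have e2 : (n1 - 1 + 1 - n1 = 0)%N by lia.
  by rewrite e2 in M.
- move=> /(S1N_eq _ _ hn0 hn01) e0 /(S2N_eq _ _ hn0 hn01) e; subst n0.
  have e1 : n1 = 2%N by lia.
  subst n1. exact: M.
Qed.
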